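(* Let $\varepsilon\in(0,1)$, $\alpha\in(0,1/5)$, $d$ with $\alpha d\ge1$, and let $G=(V,E)$ be a graph with no isolated vertices, $V=W\cup B$ a partition, $n=|V|$, such that: $G$ is an $(n,d,\alpha)$-expander; $G[W]$ has maximum degree $d_{\max}$ and minimum degree at least $2(\varepsilon+\alpha)d$; with $\delta=\varepsilon d/(d_{\max}-2\varepsilon d)$ we have $\frac{8(1+\delta)(d_{\max}+1)}{\delta^2\exp(\frac{\varepsilon}{40\alpha}\log(1+\delta))}\le1$ and $\frac{8}{d_{\max}-4\varepsilon d}\le 1$; and (B1) $|B|\le\alpha n$, (B2) no edge has both endpoints in $B$, (B3) $\deg v\le d_{\max}+1$ for all $v\in B$, (B4) $|N(v)\cap B|\le1$ for all $v\in V$. Then $G[W]$ is a $(|W|,d,2\alpha)$-expander.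
   Context: $\|M\|$ is the spectral norm, $J$ the all-ones matrix of the appropriate size, $A_H$ the adjacency matrix of $H$. A graph $H$ is an $(m,d,\alpha)$-expander if it has $m$ vertices and $\|A_H-\frac dm J\|\le\alpha d$. $G[W]$ is the induced subgraph on $W$; $N(v)$ is the neighborhood of $v$ in $G$. *)

(* Defs.v *)
From mathcomp Require Import all_boot all_order all_algebra.
From mathcomp Require Import reals.
From mathcomp.analysis Require Import sequences exp.
Set Implicit Arguments. Unset Strict Implicit. Unset Printing Implicit Defensive.
Import Order.TTheory GRing.Theory Num.Theory.
Local Open Scope ring_scope.

Section Defs.
Variables (R : realType) (T : finType).

Definition simple_graph (e : rel T) := symmetric e /\ irreflexive e.

Definition adj (e : rel T) (u v : T) : R := if e u v then 1 else 0.

(* Spectral (operator 2-) norm bound: for the square matrix M restricted to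
   rows/columns indexed by S, ||M|| <= c, i.e. c >= 0 and
   ||M x||_2^2 <= c^2 ||x||_2^2 for every real vector x indexed by S. *)
Definition spec_norm_le (S : {set T}) (M : T -> T -> R) (c : R) : Prop :=
  0 <= c /\
  forall x : T -> R,
    \sum_(u in S) (\sum_(v in S) M u v * x v) ^+ 2
      <= c ^+ 2 * \sum_(u in S) (x u) ^+ 2.

(* The induced subgraph G[S] (vertex set S, with e restricted to S) is an
   (m,d,alpha)-expander: it has m vertices and ||A_{G[S]} - (d/m) J|| <= alpha d. *)
Definition induced_expander (e : rel T) (S : {set T}) (m : nat) (d alpha : R) : Prop :=
  #|S| = m /\
  spec_norm_le S (fun u v => adj e u v - d / m%:R) (alpha * d).

Definition deg (e : rel T) (v : T) : nat := #|[set u | e v u]|.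
Definition deg_in (e : rel T) (S : {set T}) (v : T) : nat := #|[set u in S | e v u]|.

Definition maxdeg_in (e : rel T) (S : {set T}) : nat := \max_(v in S) deg_in e S v.

End Defs.

(* Main.v *)
Require Import Defs.
From mathcomp Require Import all_boot all_order all_algebra.
From mathcomp Require Import reals.
From mathcomp.analysis Require Import sequences exp.
From mathcomp Require Import ring lra zify.
Import Order.TTheory GRing.Theory Num.Theory.
Local Open Scope ring_scope.

Lemma cs_sum (R : realType) (T : finType) (W : {set T}) (x : T -> R) :
  (\sum_(v in W) x v) ^+ 2 <= #|W|%:R * \sum_(v in W) x v ^+ 2.
Proof.
have H : 0 <= \sum_(u in W) \sum_(v in W) (x u - x v) ^+ 2.
  by apply: sumr_ge0 => u _; apply: sumr_ge0 => v _; apply: sqr_ge0.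
have E : \sum_(u in W) \sum_(v in W) (x u - x v) ^+ 2 =
   2 * (#|W|%:R * \sum_(v in W) x v ^+ 2) - 2 * (\sum_(v in W) x v) ^+ 2.
  transitivity (\sum_(u in W) \sum_(v in W) (x u ^+ 2 + x v ^+ 2 - 2 * (x u * x v))).
    by apply: eq_bigr => u _; apply: eq_bigr => v _; ring.
  rewrite (eq_bigr (fun u => x u ^+ 2 *+ #|W| + \sum_(v in W) x v ^+ 2
                              - 2 * (x u * \sum_(v in W) x v))); last first.
    move=> u _; rewrite big_split big_split /= sumr_const sumrN -mulr_sumr -mulr_sumr //.
  rewrite big_split big_split /= sumrN sumr_const -mulr_sumr -mulr_suml sumrMnl.
  move: (\sum_(i in W) x i ^+ 2) (\sum_(i in W) x i) => P Q; rewrite -mulr_natr; ring.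
rewrite E in H; lra.
Qed.

Theorem lemma2p4 (R : realType) (T : finType) (e : rel T)
    (W B : {set T}) (eps alpha d : R) :
  simple_graph e ->
  0 < eps < 1 ->
  0 < alpha < 1 / 5 ->
  1 <= alpha * d ->
  (forall v : T, exists u : T, e v u) ->
  [disjoint W & B] -> W :|: B = [set: T] ->
  induced_expander (R:=R) e [set: T] #|T| d alpha ->
  (forall v, v \in W -> 2 * (eps + alpha) * d <= (deg_in e W v)%:R) ->
  let dmax : R := (maxdeg_in e W)%:R in
  let delta : R := eps * d / (dmax - 2 * eps * d) in
  8 * (1 + delta) * (dmax + 1)
    / (delta ^+ 2 * expR (eps / (40 * alpha) * ln (1 + delta))) <= 1 ->
  8 / (dmax - 4 * eps * d) <= 1 ->
  (#|B|%:R <= alpha * #|T|%:R) ->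
  (forall u v, u \in B -> v \in B -> ~~ e u v) ->
  (forall v, v \in B -> ((deg e v)%:R <= dmax + 1)) ->
  (forall v : T, (deg_in e B v <= 1)%N) ->
  induced_expander (R:=R) e W #|W| d (2 * alpha).
Proof.
move=> _ _ /andP[a0 _] ad _ dWB uWB [_ [_ Hexp]] _ dmax delta _ _ HB _ _ _.
have d0 : 0 < d.
  by rewrite -(pmulr_rgt0 _ a0); lra.
have nE : #|T| = (#|W| + #|B|)%N.
  by rewrite -cardsT -uWB cardsU (disjoint_setI0 dWB) cards0 subn0.
split=> //; split; first by nra.
move=> x.
set X := \sum_(u in W) x u ^+ 2.
set S := \sum_(v in W) x v.
set n := #|T|; set w := #|W|.
set c := d / n%:R - d / w%:R.
set a := fun u => \sum_(v in W) (adj R e u v - d / n%:R) * x v.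
have X0 : 0 <= X by apply: sumr_ge0 => u _; apply: sqr_ge0.
have Hs : forall u, \sum_(v in W) (adj R e u v - d / w%:R) * x v = a u + c * S.
  move=> u; rewrite /a /S mulr_sumr -big_split; apply: eq_bigr => v _; rewrite /c /=; ring.
have HA : \sum_(u in W) a u ^+ 2 <= (alpha * d) ^+ 2 * X.
  have := Hexp (fun v => if v \in W then x v else 0).
  have inner : forall u, \sum_(v in [set: T]) (adj R e u v - d / n%:R) *
       (if v \in W then x v else 0) = a u.
    move=> u; rewrite /a big_mkcond [RHS]big_mkcond; apply: eq_bigr => v _.
    by rewrite in_setT; case: (v \in W); rewrite ?mulr0.
  under eq_bigr => u _ do rewrite inner.
  have -> : \sum_(u in [set: T]) (if u \in W then x u else 0) ^+ 2 = X.
    rewrite /X big_mkcond [RHS]big_mkcond; apply: eq_bigr => v _.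
    by rewrite in_setT; case: (v \in W); rewrite ?expr0n.
  apply: le_trans.
  rewrite [X in _ <= X]big_mkcond [X in X <= _]big_mkcond; apply: ler_sum => u _.
  rewrite in_setT; case: (u \in W) => //; apply: sqr_ge0.
have HBs : \sum_(u in W) (c * S) ^+ 2 <= (alpha * d) ^+ 2 * X.
  rewrite sumr_const -/w.
  have cs := @cs_sum _ _ W x; rewrite -/S -/X -/w in cs.
  case: (posnP w) => [w0|wpos].
    by rewrite w0 mulr0n; apply: mulr_ge0 => //; apply: sqr_ge0.
  have n0 : (0 < n)%N by rewrite /n nE; lia.
  have cw : c * w%:R = - (d * #|B|%:R / n%:R).
    rewrite /c /n nE natrD; field.
    by rewrite -natrD !pnatr_eq0 -!lt0n; rewrite /w in wpos; apply/andP; split => //; lia.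
  have Bn : d * #|B|%:R / n%:R <= alpha * d.
    rewrite ler_pdivrMr ?ltr0n //; rewrite -/n in HB; nra.
  have Bn0 : 0 <= d * #|B|%:R / n%:R.
    by apply: divr_ge0; [apply: mulr_ge0; [lra | apply: ler0n] | apply: ler0n].
  have wp : (0 : R) < w%:R by rewrite ltr0n.
  rewrite -mulr_natr.
  have : (c * S) ^+ 2 * w%:R = (c * w%:R) ^+ 2 * (S ^+ 2 / w%:R).
    field; lra.
  move=> ->; rewrite cw sqrrN.
  have : S ^+ 2 / w%:R <= X by rewrite ler_pdivrMr //; lra.
  have : (d * #|B|%:R / n%:R) ^+ 2 <= (alpha * d) ^+ 2.
    nra.
  have : 0 <= S ^+ 2 / w%:R by apply: divr_ge0; [apply: sqr_ge0 | lra].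
  nra.
under eq_bigr => u _ do rewrite Hs.
apply: (@le_trans _ _ (\sum_(u in W) (2 * a u ^+ 2 + 2 * (c * S) ^+ 2))).
  apply: ler_sum => u _; have := sqr_ge0 (a u - c * S); nra.
have -> : \sum_(u in W) (2 * a u ^+ 2 + 2 * (c * S) ^+ 2) = 2 * \sum_(u in W) a u ^+ 2 + 2 * \sum_(u in W) (c * S) ^+ 2.
  by rewrite big_split /= !mulr_sumr.
nra.
Qed.
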